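(* Let $\phi$ be a quantum channel on $\mathcal M(d;\mathbb C)$ with more than $d$ eigenvalues of modulus $1$ counted with multiplicity, i.e. $|\sigma_P(\phi)|>d$. Then $\phi$ is asymptotically entanglement-saving.
   Context: A quantum channel is a completely positive, trace-preserving linear map on $\mathcal M(d;\mathbb C)$, regarded as a linear operator on the $d^2$-dimensional space $\mathcal M(d;\mathbb C)$ for spectral purposes. $|\sigma_P(\phi)|$ is the number of its eigenvalues of modulus $1$ counted with multiplicity. A channel is entanglement-breaking if $(\psi\otimes I)(\rho)$ is separable for every bipartite state $\rho$. $\phi$ is asymptotically entanglement-saving (AES) if no limit point of the sequence $(\phi^n)_{n\in\mathbb N}$ of its powers is entanglement-breaking. *)

(* Defs.v *)
(* The complex field is modelled by an arbitrary
   Archimedean, Cauchy-complete, numeric algebraically closed field C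
   (any such field is isomorphic to the complex numbers). *)
From HB Require Import structures.
From mathcomp Require Import all_boot all_order all_algebra.
Set Implicit Arguments. Unset Strict Implicit. Unset Printing Implicit Defensive.
Import Order.TTheory GRing.Theory Num.Theory.
Local Open Scope ring_scope.

Section QDefs.
Variable C : archiClosedFieldType.

Definition cauchy_seq (u : nat -> C) :=
  forall e : C, 0 < e -> exists N : nat,
    forall m n : nat, (N <= m)%N -> (N <= n)%N -> `|u m - u n| < e.
Definition converges (u : nat -> C) :=
  exists l : C, forall e : C, 0 < e -> exists N : nat,
    forall n : nat, (N <= n)%N -> `|u n - l| < e.
Definition complete_field := forall u : nat -> C, cauchy_seq u -> converges u.

Definition adjmx m n (A : 'M[C]_(m, n)) : 'M[C]_(n, m) := (map_mx Num.conj A)^T.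

(* positive semidefinite: v^* A v >= 0 for all v (this forces A hermitian) *)
Definition psd n (A : 'M[C]_n) :=
  forall v : 'cV[C]_n, 0 <= (adjmx v *m A *m v) 0 0.

Definition is_state n (A : 'M[C]_n) := psd A /\ \tr A = 1.

(* Decoding an index of C^m (x) C^n = C^(m*n) (mxvec_index convention). *)
Definition pidx m n (p : 'I_(m * n)) : 'I_m * 'I_n :=
  enum_val (cast_ord (esym (mxvec_cast m n)) p).

Definition tens m n (A : 'M[C]_m) (B : 'M[C]_n) : 'M[C]_(m * n) :=
  \matrix_(p, q) (A (pidx p).1 (pidx q).1 * B (pidx p).2 (pidx q).2).

(* (phi (x) id_k)(rho): phi applied blockwise *)
Definition tens_id d k (phi : 'M[C]_d -> 'M[C]_d) (rho : 'M[C]_(d * k))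
  : 'M[C]_(d * k) :=
  \matrix_(p, q)
    (phi (\matrix_(i, j) rho (mxvec_index i (pidx p).2) (mxvec_index j (pidx q).2))
       (pidx p).1 (pidx q).1).

Definition is_linear_map d (phi : 'M[C]_d -> 'M[C]_d) :=
  forall (a : C) (X Y : 'M[C]_d), phi (a *: X + Y) = a *: phi X + phi Y.

Definition completely_positive d (phi : 'M[C]_d -> 'M[C]_d) :=
  forall (k : nat) (rho : 'M[C]_(d * k)), psd rho -> psd (tens_id phi rho).

Definition trace_preserving d (phi : 'M[C]_d -> 'M[C]_d) :=
  forall X : 'M[C]_d, \tr (phi X) = \tr X.

Definition quantum_channel d (phi : 'M[C]_d -> 'M[C]_d) :=
  [/\ is_linear_map phi, completely_positive phi & trace_preserving phi].

Definition separable d k (rho : 'M[C]_(d * k)) :=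
  exists (r : nat) (pr : 'I_r -> C) (s : 'I_r -> 'M[C]_d) (t : 'I_r -> 'M[C]_k),
    [/\ forall i, 0 <= pr i, \sum_i pr i = 1,
        forall i, is_state (s i), forall i, is_state (t i) &
        rho = \sum_i pr i *: tens (s i) (t i)].

Definition entanglement_breaking d (psi : 'M[C]_d -> 'M[C]_d) :=
  forall (k : nat) (rho : 'M[C]_(d * k)), is_state rho ->
    separable (tens_id psi rho).

(* L is a limit point of the sequence of maps (phi^n)_n, the topology being
   that of entrywise convergence of the representing d^2 x d^2 matrices. *)
Definition limit_point_of_powers d (phi L : 'M[C]_d -> 'M[C]_d) :=
  is_linear_map L /\
  forall e : C, 0 < e -> forall N : nat, exists n : nat, (N <= n)%N /\
    forall i j, `|lin_mx (iter n phi) i j - lin_mx L i j| < e.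

Definition asymptotically_entanglement_saving d (phi : 'M[C]_d -> 'M[C]_d) :=
  forall L, limit_point_of_powers phi L -> ~ entanglement_breaking L.

End QDefs.

(* Main.v *)
Require Import Defs.
From HB Require Import structures.
From mathcomp Require Import ring.
From Stdlib Require Import Classical.
From mathcomp Require Import all_boot all_order all_algebra.
Import Order.TTheory GRing.Theory Num.Theory.
Local Open Scope ring_scope.
Set Implicit Arguments. Unset Strict Implicit. Unset Printing Implicit Defensive.


Section S.
Variable C : archiClosedFieldType.

Lemma pidx_mxvec m n (i : 'I_m) (j : 'I_n) : pidx (mxvec_index i j) = (i, j).
Proof. by rewrite /pidx /mxvec_index cast_ordK enum_rankK. Qed.

Lemma mxvec_pidx m n (p : 'I_(m * n)) : mxvec_index (pidx p).1 (pidx p).2 = p.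
Proof. rewrite /pidx /mxvec_index; case: (enum_val _) (enum_valK (cast_ord (esym (mxvec_cast m n)) p)) => a b /= ->; exact: cast_ordKV. Qed.

Lemma big_pidx m n (F : 'I_(m * n) -> C) :
  \sum_p F p = \sum_i \sum_j F (mxvec_index i j).
Proof.
rewrite pair_big /=.
rewrite (reindex (fun ij : 'I_m * 'I_n => mxvec_index ij.1 ij.2)) //=.
exists (fun p => pidx p) => [ij _|p _]; last exact: mxvec_pidx.
by rewrite pidx_mxvec -surjective_pairing.
Qed.

Section Lin.
Variables (m n : nat) (f : 'M[C]_(m, n) -> 'M[C]_(m, n)).
Hypothesis fl : forall (a : C) X Y, f (a *: X + Y) = a *: f X + f Y.

Lemma lin0 : f 0 = 0.
Proof.
have := fl (-1) 0 0; rewrite scaler0 add0r scaleN1r => h.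
by rewrite addNr in h.
Qed.
Lemma linD X Y : f (X + Y) = f X + f Y.
Proof. by have := fl 1 X Y; rewrite !scale1r. Qed.
Lemma linZ a X : f (a *: X) = a *: f X.
Proof. by have := fl a X 0; rewrite !addr0 lin0 addr0. Qed.
Lemma linB X Y : f (X - Y) = f X - f Y.
Proof. by rewrite -scaleN1r linD linZ scaleN1r. Qed.
Lemma lin_sum I (r : seq I) (P : pred I) (F : I -> 'M[C]_(m, n)) :
  f (\sum_(i <- r | P i) F i) = \sum_(i <- r | P i) f (F i).
Proof.
elim/big_rec2: _ => [|i y1 y2 _ <-]; first exact: lin0.
by rewrite linD.
Qed.

Lemma lin_mxE (i j : 'I_(m * n)) :
  lin_mx f i j = mxvec (f (vec_mx (delta_mx 0 i))) 0 j.
Proof. by rewrite /lin_mx /lin1_mx mxE. Qed.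

Lemma mul_rV_lin' (u : 'rV_(m * n)) : u *m lin_mx f = mxvec (f (vec_mx u)).
Proof.
rewrite [u in LHS]matrix_sum_delta big_ord1.
rewrite [vec_mx u]matrix_sum_delta lin_sum.
apply/rowP => k.
rewrite mulmx_suml summxE big_pidx raddf_sum summxE.
apply: eq_bigr => i _; rewrite lin_sum raddf_sum summxE.
apply: eq_bigr => j _.
rewrite -scalemxAl -rowE linZ.
rewrite [in LHS]mxE [row _ _ _ _]mxE lin_mxE vec_mx_delta.
rewrite -[k]mxvec_pidx !mxvecE [in RHS]mxE.
by rewrite [vec_mx u i j]mxE.
Qed.
End Lin.

Lemma row_lin m n (h : 'M[C]_(m, n) -> 'M[C]_(m, n)) i :
  delta_mx 0 i *m lin_mx h = mxvec (h (vec_mx (delta_mx 0 i))).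
Proof. by apply/rowP => j; rewrite -rowE !mxE. Qed.

Lemma lin_mx_comp n (f g : 'M[C]_n -> 'M[C]_n) :
  is_linear_map f -> lin_mx (f \o g) = lin_mx g *m lin_mx f.
Proof.
move=> fl; apply/row_matrixP => i; rewrite !rowE mulmxA !row_lin.
by rewrite mul_rV_lin' // mxvecK.
Qed.

Lemma lin_mx_id m n : lin_mx (@id 'M[C]_(m, n)) = 1%:M.
Proof.
apply/row_matrixP => i; rewrite !rowE row_lin vec_mxK.
by rewrite mulmx1.
Qed.

Lemma tr_lin_mx n (h : 'M[C]_n -> 'M[C]_n) :
  \tr (lin_mx h) = \sum_i \sum_j h (delta_mx i j) i j.
Proof.
rewrite /mxtrace big_pidx; apply: eq_bigr => i _; apply: eq_bigr => j _.
by rewrite lin_mxE vec_mx_delta mxvecE.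
Qed.

Lemma iter_lin n (phi : 'M[C]_n -> 'M[C]_n) k :
  is_linear_map phi -> is_linear_map (iter k phi).
Proof.
move=> pl; elim: k => [|k IH] a X Y //=.
by rewrite IH pl.
Qed.

Lemma lin_mx_iter n (phi : 'M[C]_n -> 'M[C]_n) k :
  is_linear_map phi -> lin_mx (iter k phi) = (lin_mx phi) ^+ k.
Proof.
move=> pl; elim: k => [|k IH].
  by rewrite expr0 /=; exact: lin_mx_id.
by rewrite exprSr -IH -mulmxE -lin_mx_comp.
Qed.
End S.


Section S2.
Variable C : archiClosedFieldType.

Lemma trig_mul n (A B : 'M[C]_n) : is_trig_mx A -> is_trig_mx B ->
  is_trig_mx (A *m B) /\ forall i, (A *m B) i i = A i i * B i i.
Proof.
move=> /is_trig_mxP tA /is_trig_mxP tB; split.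
  apply/is_trig_mxP => i j lij; rewrite mxE big1 // => k _.
  case: (ltnP i k) => [lik|lki]; first by rewrite tA ?mul0r.
  by rewrite tB ?mulr0 // (leq_ltn_trans lki lij).
move=> i; rewrite mxE (bigD1 i) //= big1 ?addr0 // => k nki.
case: (ltnP i k) => [lik|lki]; first by rewrite tA ?mul0r.
rewrite tB ?mulr0 //; rewrite ltn_neqAle lki andbT.
by apply: contra nki => /eqP h; apply/eqP/val_inj.
Qed.

Lemma trig_exp n (A : 'M[C]_n) k : is_trig_mx A ->
  is_trig_mx (A ^+ k) /\ forall i, (A ^+ k) i i = A i i ^+ k.
Proof.
move=> tA; elim: k => [|k [tk dk]].
  by split; [rewrite expr0; exact: scalar_mx_is_trig | move=> i; rewrite expr0 !mxE eqxx].
have [h1 h2] := trig_mul tk tA.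
by rewrite exprSr -mulmxE; split => // i; rewrite h2 dk exprSr.
Qed.

Lemma char_poly_conj n (P M : 'M[C]_n) : P \in unitmx ->
  char_poly (P *m M *m invmx P) = char_poly M.
Proof.
move=> Pu.
have e : char_poly_mx (P *m M *m invmx P) =
   map_mx polyC P *m char_poly_mx M *m map_mx polyC (invmx P).
  rewrite /char_poly_mx mulmxBr mulmxBl !map_mxM.
  rewrite scalar_mxC; congr (_ - _).
  by rewrite -mulmxA -map_mxM mulmxV // map_mx1 mulmx1.
rewrite /char_poly e !det_mulmx mulrC mulrA -det_mulmx -map_mxM mulVmx //.
by rewrite map_mx1 det1 mul1r.
Qed.

Lemma eig_powsum N (M : 'M[C]_N) (s : seq C) :
  char_poly M = \prod_(x <- s) ('X - x%:P) ->
  forall k, \tr (M ^+ k) = \sum_(x <- s) x ^+ k.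
Proof.
move=> Hs k.
case: N M Hs => [|N] M Hs.
  have : size s = 0%N.
    have := size_char_poly M; rewrite Hs size_prod_XsubC.
    by case.
  by case: s Hs => // _ _; rewrite big_nil /mxtrace big_ord0.
have [P Pu tP] := Schur M (ltn0Sn N).
have Pu' : P \in unitmx by exact: unitarymx_unit.
move: tP; rewrite /similar_to /conjmx pinvmxE // => tT.
set T := P *m M *m invmx P in tT.
have Te j : T ^+ j = P *m M ^+ j *m invmx P.
  elim: j => [|j IH].
    by rewrite !expr0; have -> : (1 : 'M[C]_N.+1) = 1%:M by []; rewrite mulmx1 mulmxV.
  rewrite exprSr IH [in RHS]exprSr -!mulmxE /T !mulmxA.
  by rewrite -[_ *m invmx P *m P]mulmxA mulVmx // mulmx1.
have cT : char_poly T = \prod_(x <- [seq T i i | i : 'I_N.+1]) ('X - x%:P).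
  by rewrite char_poly_trig // big_image.
have pe : perm_eq s [seq T i i | i : 'I_N.+1].
  apply: prod_XsubC_eq; rewrite -Hs -cT /T char_poly_conj //.
rewrite (perm_big _ pe) big_image /=.
have [_ dk] := trig_exp k tT.
rewrite -(eq_bigr _ (fun i _ => dk i)) -/(\tr (T ^+ k)) Te.
by rewrite mxtrace_mulC mulmxA mulVmx // mul1mx.
Qed.
End S2.


Section S3.
Variable C : archiClosedFieldType.

Lemma form_sum n (A : 'M[C]_n) (v : 'cV[C]_n) :
  (adjmx v *m A *m v) 0 0 = \sum_p (v p 0)^* * \sum_q A p q * v q 0.
Proof.
rewrite mxE (eq_bigr (fun p => \sum_q (v q 0)^* * A q p * v p 0)); last first.
  by move=> p _; rewrite mxE mulr_suml; apply: eq_bigr => q _; rewrite !mxE.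
rewrite exchange_big; apply: eq_bigr => q _; rewrite mulr_sumr.
by apply: eq_bigr => p _; rewrite mulrA.
Qed.

Lemma sum_ind n (i : 'I_n) (F : 'I_n -> C) :
  \sum_q (q == i)%:R * F q = F i.
Proof.
rewrite (bigD1 i) //= eqxx mul1r big1 ?addr0 // => q /negbTE ->.
by rewrite mul0r.
Qed.

Lemma sum_ind_r n (i : 'I_n) (F : 'I_n -> C) :
  \sum_q F q * (q == i)%:R = F i.
Proof. by rewrite -(sum_ind i F); apply: eq_bigr => q _; rewrite mulrC. Qed.

Definition vec2 n (i j : 'I_n) (a b : C) : 'cV[C]_n :=
  \col_k ((k == i)%:R * a + (k == j)%:R * b).

Lemma form2 n (A : 'M[C]_n) i j a b :
  (adjmx (vec2 i j a b) *m A *m vec2 i j a b) 0 0 =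
  a^* * (A i i * a + A i j * b) + b^* * (A j i * a + A j j * b).
Proof.
rewrite form_sum.
have inner p : \sum_q A p q * vec2 i j a b q 0 = A p i * a + A p j * b.
  rewrite (eq_bigr (fun q => (q == i)%:R * (A p q * a) + (q == j)%:R * (A p q * b)));
    last by move=> q _; rewrite mxE mulrDr !mulrA ![A p q * _]mulrC.
  by rewrite big_split /= !sum_ind.
rewrite (eq_bigr (fun p => (p == i)%:R * (a^* * (A p i * a + A p j * b)) +
                          (p == j)%:R * (b^* * (A p i * a + A p j * b)))).
  by rewrite big_split /= !sum_ind.
move=> p _; rewrite inner mxE rmorphD /= !rmorphM /= !conjC_nat.
by rewrite mulrDl !mulrA.
Qed.

Lemma psd_diag n (A : 'M[C]_n) i : psd A -> 0 <= A i i.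
Proof.
move=> h; have := h (vec2 i i 1 0).
by rewrite form2 conjC1 conjC0 mul0r addr0 mulr1 mulr0 addr0 mul1r.
Qed.

Lemma psd_herm n (A : 'M[C]_n) i j : psd A -> A j i = (A i j)^*.
Proof.
move=> h.
set x := A i i; set y := A j j; set u := A i j; set w := A j i.
have rx := ger0_real (psd_diag i h); have ry := ger0_real (psd_diag j h).
have r1 : (u + w) \is Num.real.
  have := h (vec2 i j 1 1); rewrite form2 !conjC1 -/x -/y -/u -/w => /ger0_real H.
  have -> : u + w = (1 * (x * 1 + u * 1) + 1 * (w * 1 + y * 1)) - x - y by ring.
  by rewrite !rpredB.
have r2 : ('i * (u - w)) \is Num.real.
  have := h (vec2 i j 1 'i); rewrite form2 !conjC1 -/x -/y -/u -/w => /ger0_real H.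
  have -> : 'i * (u - w) = (1 * (x * 1 + u * 'i) + 'i^* * (w * 1 + y * 'i)) - x - y.
    rewrite conjCi; have hi : 'i * 'i = -1 :> C by rewrite -expr2 sqrCi.
    rewrite [RHS](_ : _ = 'i * (u - w) - ('i * 'i + 1) * y); last by ring.
    by rewrite hi addNr mul0r subr0.
  by rewrite !rpredB.
have E1 : u^* + w^* = u + w by rewrite -[RHS](conj_Creal r1) rmorphD.
have E2 : u^* - w^* = w - u.
  have := conj_Creal r2; rewrite rmorphM rmorphB /= conjCi mulNr => e.
  apply: (mulfI (neq0Ci C)).
  by rewrite -[LHS]opprK e -mulrN opprB.
have two : (2 : C) != 0 by rewrite pnatr_eq0.
apply: (mulfI two).
rewrite [LHS](_ : _ = (u + w) + (w - u)); last by ring.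
by rewrite -E1 -E2; ring.
Qed.

Lemma psd_cs n (A : 'M[C]_n) i j : psd A -> A i j * (A i j)^* <= A i i * A j j.
Proof.
move=> h.
set x := A i i; set y := A j j; set u := A i j.
have hx := psd_diag i h; have hy := psd_diag j h.
have hw : A j i = u^* by rewrite psd_herm.
have ry : y^* = y by rewrite conj_Creal // ger0_real.
have rx : x^* = x by rewrite conj_Creal // ger0_real.
case: (eqVneq y 0) => [y0|yn0].
  case: (eqVneq u 0) => [->|un0]; first by rewrite mul0r y0 mulr0.
  have p : 0 < u * u^* by rewrite mul_conjC_gt0.
  set c := (x + 1) / (2 * (u * u^*)).
  have rc : c^* = c.
    apply: conj_Creal; apply: rpredM; first exact: rpredD (ger0_real hx) (rpred1 _).
    by rewrite rpredV; apply: rpredM; [exact: rpred_nat | exact: ger0_real (ltW p)].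
  have := h (vec2 i j 1 (- c * u^*)); rewrite form2 -/x -/u -/y hw y0.
  rewrite conjC1 !mul1r mulr1 mul0r addr0.
  have cc : (- c * u^*)^* = - c * u.
    by rewrite rmorphM rmorphN /= rc; congr (_ * _); apply: conjCK.
  rewrite cc.
  have -> : x + u * (- c * u^*) + - c * u * (u^* * 1) = x - 2 * c * (u * u^*) by ring.
  have -> : 2 * c * (u * u^*) = x + 1.
    rewrite /c mulrA [2 * _]mulrC -!mulrA mulVf ?mulr1 //.
    by rewrite mulf_neq0 ?pnatr_eq0 // lt0r_neq0.
  by rewrite opprD addrA subrr sub0r oppr_ge0 lt_geF // ltr01.
have cu : (- u^*)^* = - u by rewrite rmorphN /=; congr (- _); apply: conjCK.
have := h (vec2 i j y (- u^*)); rewrite form2 -/x -/u -/y hw ry cu.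
have -> : y * (x * y + u * - u^*) + - u * (u^* * y + y * - u^*) =
          y * (x * y - u * u^*) by ring.
have ypos : 0 < y by rewrite lt0r yn0.
by rewrite pmulr_rge0 // subr_ge0 mulrC.
Qed.

Lemma prod_bound n (s t : 'M[C]_n) i j : psd s -> psd t ->
  `|s i j| * `|t i j| <= (s i i * t j j + s j j * t i i) / 2.
Proof.
move=> hs ht.
have nn : forall i, 0 <= s i i /\ 0 <= t i i by move=> k; split; apply: psd_diag.
have [s1 t1] := nn i; have [s2 t2] := nn j.
set a := `|s i j| * `|t i j|; set b := (s i i * t j j + s j j * t i i) / 2.
have a0 : 0 <= a by rewrite mulr_ge0.
have b0 : 0 <= b by rewrite divr_ge0 ?ler0n // addr_ge0 // mulr_ge0.
rewrite -(ler_sqr a0 b0).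
apply: (le_trans (y := (s i i * t j j) * (s j j * t i i))).
  rewrite /a exprMn !normCK.
  have := psd_cs i j hs; have := psd_cs i j ht.
  move=> h1 h2.
  rewrite [X in _ <= X](_ : _ = (s i i * s j j) * (t i i * t j j)); last by ring.
  apply: (le_trans (ler_wpM2r _ h2)); first by rewrite mul_conjC_ge0.
  by rewrite ler_wpM2l // mulr_ge0.
set al := s i i * t j j; set be := s j j * t i i.
have ral : al - be \is Num.real by rewrite rpredB // ger0_real // mulr_ge0.
rewrite -subr_ge0 /b -/al -/be.
rewrite [X in 0 <= X](_ : _ = ((al - be) / 2) ^+ 2); last first.
  by field.
have rr : (al - be) / 2 \is Num.real by rewrite rpredM // rpredV rpred_nat.
by rewrite -(real_normK rr) exprn_ge0.
Qed.

Lemma prod_state_bound n (s t : 'M[C]_n) : psd s -> psd t ->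
  `|\sum_i \sum_j s i j * t i j| <= \tr s * \tr t.
Proof.
move=> hs ht.
have e1 : \tr s * \tr t = \sum_i \sum_j s i i * t j j.
  by rewrite /mxtrace mulr_suml; apply: eq_bigr => i _; rewrite mulr_sumr.
have e2 : \tr s * \tr t = \sum_i \sum_j s j j * t i i.
  by rewrite e1 exchange_big.
have e : \tr s * \tr t = \sum_i \sum_j (s i i * t j j + s j j * t i i) / 2.
  rewrite (eq_bigr (fun i => (\sum_j s i i * t j j + \sum_j s j j * t i i) / 2)); last first.
    by move=> i _; rewrite -big_split /= mulr_suml.
  rewrite -mulr_suml big_split /= -e1 -e2.
  by field.
rewrite e; apply: (le_trans (ler_norm_sum _ _ _)); apply: ler_sum => i _.
apply: (le_trans (ler_norm_sum _ _ _)); apply: ler_sum => j _.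
by rewrite normrM prod_bound.
Qed.
End S3.


Section S4.
Variable C : archiClosedFieldType.

Definition dg d (p : 'I_(d * d)) : C := ((pidx p).1 == (pidx p).2)%:R.

Definition Omega d : 'M[C]_(d * d) :=
  \matrix_(p, q) (d%:R^-1 * dg p * dg q).

Lemma Omega_state d : (0 < d)%N -> is_state (Omega d).
Proof.
move=> d0; split.
  move=> v; rewrite form_sum.
  set a := \sum_q dg q * v q 0.
  rewrite (eq_bigr (fun p => d%:R^-1 * a * (dg p * (v p 0)^*))); last first.
    move=> p _; rewrite (eq_bigr (fun q => d%:R^-1 * dg p * (dg q * v q 0))).
      by rewrite -mulr_sumr -/a; ring.
    by move=> q _; rewrite mxE; ring.
  rewrite -mulr_sumr.
  have -> : \sum_p dg p * (v p 0)^* = a^*.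
    by rewrite /a rmorph_sum; apply: eq_bigr => p _; rewrite rmorphM /= /dg conjC_nat.
  by rewrite -mulrA mulr_ge0 ?invr_ge0 ?ler0n ?mul_conjC_ge0.
rewrite /mxtrace big_pidx.
rewrite (eq_bigr (fun i => d%:R^-1)).
  rewrite sumr_const card_ord -[_ *+ d]mulr_natr mulVf //.
  by rewrite pnatr_eq0 -lt0n.
move=> i _; rewrite (bigD1 i) //= big1 ?addr0.
  by rewrite mxE /dg pidx_mxvec /= eqxx !mulr1.
by move=> j /negbTE nji; rewrite mxE /dg pidx_mxvec /= eq_sym nji !mulr0.
Qed.

Lemma tens_id_comp d k (f g : 'M[C]_d -> 'M[C]_d) (rho : 'M[C]_(d * k)) :
  tens_id (fun X => f (g X)) rho = tens_id f (tens_id g rho).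
Proof.
apply/matrixP => p q; rewrite !mxE; congr (f _ _ _).
by apply/matrixP => i j; rewrite !mxE !pidx_mxvec.
Qed.

Lemma tens_id_id d k (rho : 'M[C]_(d * k)) : tens_id id rho = rho.
Proof. by apply/matrixP => p q; rewrite !mxE !mxvec_pidx. Qed.

Lemma tens_id_tr d k (psi : 'M[C]_d -> 'M[C]_d) (rho : 'M[C]_(d * k)) :
  trace_preserving psi -> \tr (tens_id psi rho) = \tr rho.
Proof.
move=> tp; rewrite /mxtrace !big_pidx exchange_big [RHS]exchange_big.
apply: eq_bigr => c _.
rewrite (eq_bigr (fun i => psi (\matrix_(i0, j0) rho (mxvec_index i0 c) (mxvec_index j0 c)) i i)); last first.
  by move=> i _; rewrite mxE !pidx_mxvec.
have := tp (\matrix_(i0, j0) rho (mxvec_index i0 c) (mxvec_index j0 c)).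
rewrite /mxtrace => ->; by apply: eq_bigr => i _; rewrite mxE.
Qed.

Lemma channel_state d k (psi : 'M[C]_d -> 'M[C]_d) (rho : 'M[C]_(d * k)) :
  quantum_channel psi -> is_state rho -> is_state (tens_id psi rho).
Proof.
by case=> _ cp tp [hp ht]; split; [apply: cp | rewrite tens_id_tr].
Qed.

Lemma iter_channel d (phi : 'M[C]_d -> 'M[C]_d) n :
  quantum_channel phi -> quantum_channel (iter n phi).
Proof.
move=> hq; have [pl cp tp] := hq; split; first exact: iter_lin.
  move=> k rho; elim: n => [|n IH] /=; first by rewrite tens_id_id.
  by rewrite tens_id_comp => h; apply: cp; apply: IH.
by move=> X; elim: n => [|n IH] //=; rewrite tp.
Qed.

Definition Qf d (X : 'M[C]_(d * d)) :=
  \sum_i \sum_j X (mxvec_index i i) (mxvec_index j j).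

Lemma Qf_tens d (s t : 'M[C]_d) : Qf (tens s t) = \sum_i \sum_j s i j * t i j.
Proof.
by rewrite /Qf; apply: eq_bigr => i _; apply: eq_bigr => j _; rewrite mxE !pidx_mxvec.
Qed.

Lemma Qf_sum d r (pr : 'I_r -> C) (X : 'I_r -> 'M[C]_(d * d)) :
  Qf (\sum_k pr k *: X k) = \sum_k pr k * Qf (X k).
Proof.
rewrite /Qf (eq_bigr (fun i => \sum_j \sum_k pr k * X k (mxvec_index i i) (mxvec_index j j))).
  rewrite [RHS](eq_bigr (fun k => \sum_i \sum_j pr k * X k (mxvec_index i i) (mxvec_index j j))); last first.
    by move=> k _; rewrite mulr_sumr; apply: eq_bigr => i _; rewrite mulr_sumr.
  rewrite [RHS]exchange_big; apply: eq_bigr => i _.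
  by rewrite [RHS]exchange_big.
move=> i _; apply: eq_bigr => j _; rewrite summxE; apply: eq_bigr => k _.
by rewrite mxE.
Qed.

Lemma block_Omega d i j :
  \matrix_(a, b) (Omega d) (mxvec_index a i) (mxvec_index b j) =
  d%:R^-1 *: delta_mx i j :> 'M[C]_d.
Proof.
apply/matrixP => a b; rewrite !mxE /dg !pidx_mxvec /=.
by case: (a == i); case: (b == j); rewrite /= ?mulr1 ?mulr0.
Qed.

Lemma Qf_EB d (L psi : 'M[C]_d -> 'M[C]_d) :
  is_linear_map L -> is_linear_map psi ->
  Qf (tens_id L (tens_id psi (Omega d))) =
  d%:R^-1 * \tr (lin_mx (fun X => L (psi X))).
Proof.
move=> Ll pl; rewrite tr_lin_mx mulr_sumr; apply: eq_bigr => i _.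
rewrite mulr_sumr; apply: eq_bigr => j _.
rewrite mxE !pidx_mxvec /=.
have -> : \matrix_(i0, j0) tens_id psi (Omega d) (mxvec_index i0 i) (mxvec_index j0 j)
        = d%:R^-1 *: psi (delta_mx i j).
  rewrite -(linZ pl) -block_Omega; apply/matrixP => a b.
  by rewrite !mxE !pidx_mxvec.
by rewrite (linZ Ll) mxE.
Qed.

Lemma EB_trace_bound d (L psi : 'M[C]_d -> 'M[C]_d) : (0 < d)%N ->
  is_linear_map L -> entanglement_breaking L -> quantum_channel psi ->
  `|\tr (lin_mx (fun X => L (psi X)))| <= d%:R.
Proof.
move=> d0 Ll EB hq.
have pl : is_linear_map psi by case: hq.
have st := channel_state hq (Omega_state d0).
have [r [pr [s [t [hpr hsum hs ht e]]]]] := EB d _ st.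
have := Qf_EB Ll pl; rewrite e Qf_sum => eq.
have dn : d%:R != 0 :> C by rewrite pnatr_eq0 -lt0n.
have -> : \tr (lin_mx (fun X => L (psi X))) =
          d%:R * \sum_k pr k * Qf (tens (s k) (t k)).
  by rewrite eq mulrA mulfV // mul1r.
rewrite normrM normr_nat -[X in _ <= X]mulr1 ler_wpM2l ?ler0n //.
rewrite -hsum; apply: (le_trans (ler_norm_sum _ _ _)); apply: ler_sum => k _.
rewrite normrM ger0_norm // -[X in _ <= X]mulr1 ler_wpM2l //.
have [ps ts] := hs k; have [pt tt] := ht k.
by rewrite Qf_tens; have := prod_state_bound ps pt; rewrite ts tt mulr1.
Qed.
End S4.


Section S5.
Variable C : archiClosedFieldType.

Lemma bern (h : C) n : 0 <= h -> 1 + n%:R * h <= (1 + h) ^+ n.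
Proof.
move=> h0; elim: n => [|n IH]; first by rewrite mul0r addr0 expr0.
rewrite exprSr.
have e : (1 + n%:R * h) * (1 + h) = 1 + n.+1%:R * h + n%:R * h * h.
  by rewrite -addn1 natrD; ring.
apply: (le_trans (y := (1 + n%:R * h) * (1 + h))).
  by rewrite e lerDl mulr_ge0 // mulr_ge0 // ler0n.
by rewrite ler_wpM2r // addr_ge0.
Qed.

Lemma pow_unbounded (r B : C) : 1 < r -> 0 <= B ->
  exists N : nat, forall n, (N <= n)%N -> B < r ^+ n.
Proof.
move=> r1 B0.
set h := r - 1.
have h0 : 0 < h by rewrite subr_gt0.
exists (Num.bound (B / h)) => n hn.
have := archi_boundP (divr_ge0 B0 (ltW h0)) => hb.
have hr : r = 1 + h by rewrite /h addrC subrK.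
rewrite hr; apply: (lt_le_trans _ (bern n (ltW h0))).
apply: (lt_le_trans (y := n%:R * h)); last by rewrite lerDr.
rewrite -ltr_pdivrMr //; apply: (lt_le_trans hb).
by rewrite ler_nat.
Qed.

Lemma pow_small (x e : C) : `|x| < 1 -> 0 < e ->
  exists N : nat, forall n, (N <= n)%N -> `|x ^+ n| < e.
Proof.
move=> x1 e0.
case: (eqVneq x 0) => [->|xn0].
  by exists 1%N => [[|n]] // _; rewrite expr0n /= normr0.
have nx : 0 < `|x| by rewrite normr_gt0.
have r1 : 1 < `|x|^-1 by rewrite invf_gt1.
have ie : 0 <= e^-1 by rewrite invr_ge0 ltW.
have [N HN] := pow_unbounded r1 ie.
exists N => n hn; have := HN n hn.
rewrite exprVn normrX ltf_pV2 // posrE ?exprn_gt0 //.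
Qed.

Lemma decay_seq (r : seq C) : (forall x, x \in r -> `|x| < 1) ->
  forall e, 0 < e -> exists N : nat, forall n, (N <= n)%N ->
    `|\sum_(x <- r) x ^+ n| < e.
Proof.
elim: r => [|y r IH] hr e e0.
  by exists 0%N => n _; rewrite big_nil normr0.
have e2 : 0 < e / 2 by rewrite divr_gt0.
have [N1 H1] := pow_small (hr y (mem_head _ _)) e2.
have [N2 H2] : exists N : nat, forall n, (N <= n)%N -> `|\sum_(x <- r) x ^+ n| < e / 2.
  by apply: IH => // x xr; apply: hr; rewrite in_cons xr orbT.
exists (maxn N1 N2) => n; rewrite geq_max => /andP [n1 n2].
rewrite big_cons; apply: (le_lt_trans (ler_normD _ _)).
by rewrite [e](splitr e) ltrD ?H1 ?H2.
Qed.

Lemma Re_le (z : C) : `|'Re z| <= `|z|.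
Proof.
rewrite -ler_sqr ?nnegrE // (real_normK (Creal_Re z)) normC2_Re_Im.
by rewrite lerDl -(real_normK (Creal_Im z)) exprn_ge0.
Qed.

Lemma Im_le (z : C) : `|'Im z| <= `|z|.
Proof.
rewrite -ler_sqr ?nnegrE // (real_normK (Creal_Im z)) normC2_Re_Im.
by rewrite lerDr -(real_normK (Creal_Re z)) exprn_ge0.
Qed.

Lemma norm_ReIm (z : C) : `|z| <= `|'Re z| + `|'Im z|.
Proof.
rewrite {1}[z]Crect; apply: (le_trans (ler_normD _ _)).
by rewrite normrM normCi mul1r.
Qed.

Definition cellr (T : nat) (a : C) : 'I_(2 * T).+1 :=
  inord (Num.truncn ((a + 1) * T%:R)).

Lemma trunc_close (x y : C) : 0 <= x -> 0 <= y ->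
  Num.truncn x = Num.truncn y -> `|x - y| < 1.
Proof.
move=> x0 y0 e.
have /andP [lx ux] := truncn_itv x0; have /andP [ly uy] := truncn_itv y0.
rewrite e in lx ux.
rewrite real_ltr_norml ?rpredB ?ger0_real //; apply/andP; split.
  have uy' : - (Num.truncn y).+1%:R < - y by rewrite ltrN2.
  have := ler_ltD lx uy'.
  by rewrite -natr1 opprD addrA subrr add0r.
have ly' : - y <= - (Num.truncn y)%:R by rewrite lerN2.
have := ltr_leD ux ly'.
by rewrite -natr1 addrAC subrr add0r.
Qed.

Lemma cellr_close T (a b : C) : (0 < T)%N ->
  a \is Num.real -> b \is Num.real -> `|a| <= 1 -> `|b| <= 1 ->
  cellr T a = cellr T b -> `|a - b| < T%:R^-1.
Proof.
move=> T0 ra rb a1 b1 e.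
have Tp : 0 < T%:R :> C by rewrite ltr0n.
have h0 (c : C) : c \is Num.real -> `|c| <= 1 -> 0 <= (c + 1) * T%:R.
  move=> rc c1; rewrite mulr_ge0 ?ler0n // -lerBlDr sub0r.
  by move: c1; rewrite real_ler_norml // => /andP [].
have h2 (c : C) : c \is Num.real -> `|c| <= 1 -> (Num.truncn ((c + 1) * T%:R) < (2 * T).+1)%N.
  move=> rc c1; rewrite ltnS real_truncn_le_nat; last by rewrite rpredM ?rpredD ?rpred1 ?rpred_nat.
  apply: (le_lt_trans (y := (2 * T)%:R)); last by rewrite ltr_nat.
  rewrite natrM ler_wpM2r ?ler0n // (_ : 2%:R = 1 + 1) //.
  by rewrite lerD2r; move: c1; rewrite real_ler_norml // => /andP [].
move: e; rewrite /cellr => /(congr1 val) /=; rewrite !inordK ?h2 // => e.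
have := trunc_close (h0 a ra a1) (h0 b rb b1) e.
rewrite -mulrBl (_ : (a + 1) - (b + 1) = a - b); last by ring.
by rewrite normrM (gtr0_norm Tp) -ltr_pdivlMr // mul1r.
Qed.

Definition cellc T (z : C) := (cellr T ('Re z), cellr T ('Im z)).

Lemma cellc_close T (z w : C) : (0 < T)%N -> `|z| <= 1 -> `|w| <= 1 ->
  cellc T z = cellc T w -> `|z - w| < 2 * T%:R^-1.
Proof.
move=> T0 z1 w1 [e1 e2].
apply: (le_lt_trans (norm_ReIm _)); rewrite mulr_natl mulr2n.
rewrite !raddfB /=; apply: ltrD; apply: cellr_close => //;
  by [exact: Creal_Re | exact: Creal_Im | apply: le_trans (Re_le _) _ | apply: le_trans (Im_le _) _].
Qed.

Lemma pigeon (X : finType) (g : nat -> X) :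
  exists a b, (a < b)%N /\ (b <= #|X|)%N /\ g a = g b.
Proof.
pose f := fun i : 'I_(#|X|.+1) => g i.
have : ~~ injectiveb f.
  apply/negP => /injectiveP inj; have := leq_card f inj.
  by rewrite card_ord ltnn.
move=> /injectivePn [x [y xy fxy]].
case: (ltngtP x y) => [lxy|lyx|exy].
- by exists x, y; split => //; split => //; rewrite -ltnS.
- by exists y, x; split => //; split => //; rewrite -ltnS.
- by move: xy; rewrite (val_inj exy) eqxx.
Qed.

Lemma box (X : finType) (G : nat -> nat -> Prop) (g : nat -> X) :
  (forall j j' n, (j <= j')%N -> G j' n -> G j n) ->
  (forall j N, exists n, (N <= n)%N /\ G j n) ->
  exists c, forall j N, exists n, (N <= n)%N /\ G j n /\ g n = c.
Proof.
move=> mono freq.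
apply: NNPP => H.
have H' : forall c : X, exists jN : nat * nat,
    forall n, (jN.2 <= n)%N -> G jN.1 n -> g n <> c.
  move=> c; apply: NNPP => Hc; apply: H; exists c => j N.
  apply: NNPP => Hn; apply: Hc; exists (j, N) => n /= hn hG hg.
  by apply: Hn; exists n.
have [F HF] := fin_all_exists H'.
pose J := \max_(c : X) (F c).1; pose N := \max_(c : X) (F c).2.
have [n [hn hG]] := freq J N.
apply: (HF (g n) n) => //.
  by apply: leq_trans hn; rewrite /N (@leq_bigmax X _ (g n)).
by apply: mono hG; rewrite /J (@leq_bigmax X _ (g n)).
Qed.

Lemma pow_norm1 (x : C) n : `|x| = 1 -> `|x ^+ n| = 1.
Proof. by move=> h; rewrite normrX h expr1n. Qed.

Lemma dirichlet m (lam : 'I_m -> C) (T N0 : nat) : (0 < T)%N -> (0 < N0)%N ->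
  (forall j, `|lam j| = 1) ->
  exists K, (N0 <= K)%N /\ forall j, `|lam j ^+ K - 1| < 2 * T%:R^-1.
Proof.
move=> T0 N00 hl.
pose g q : {ffun 'I_m -> 'I_(2 * T).+1 * 'I_(2 * T).+1} :=
  [ffun j => cellc T (lam j ^+ (N0 * q))].
have [a [b [ab [_ gab]]]] := pigeon g.
exists (N0 * (b - a))%N; split.
  by rewrite -{1}[N0]muln1 leq_mul2l subn_gt0 ab orbT.
move=> j.
have := congr1 (fun f : {ffun _ -> _} => f j) gab; rewrite /g !ffunE => ec.
have n1 k : `|lam j ^+ k| <= 1 by rewrite pow_norm1.
have := cellc_close T0 (n1 _) (n1 _) ec.
have -> : (N0 * b = N0 * a + N0 * (b - a))%N by rewrite -mulnDr subnKC // ltnW.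
rewrite exprD -{1}[lam j ^+ (N0 * a)]mulr1 -mulrBr normrM pow_norm1 // mul1r.
by rewrite distrC.
Qed.
End S5.


Section S6.
Variable C : archiClosedFieldType.

Lemma shift_close (l : C) n n0 K e : `|l| = 1 -> (n0 <= K)%N ->
  `|l ^+ n - l ^+ n0| < e -> `|l ^+ K - 1| < e -> `|l ^+ (n + (K - n0)) - 1| < e + e.
Proof.
move=> l1 nK h1 h2.
have e1 : l ^+ (n + (K - n0)) * l ^+ n0 = l ^+ n * l ^+ K.
  by rewrite -!exprD -addnA subnK.
have -> : `|l ^+ (n + (K - n0)) - 1| = `|l ^+ n * l ^+ K - l ^+ n0|.
  by rewrite -e1 -{2}[l ^+ n0]mul1r -mulrBl normrM pow_norm1 // mulr1.
have -> : l ^+ n * l ^+ K - l ^+ n0 = l ^+ n * (l ^+ K - 1) + (l ^+ n - l ^+ n0).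
  by ring.
apply: (le_lt_trans (ler_normD _ _)); rewrite normrM pow_norm1 // mul1r.
by rewrite addrC ltrD.
Qed.

Lemma tr_pert N (B D : 'M[C]_N) e : (forall a b, `|D a b| < e) ->
  `|\tr (B *m D)| <= (\sum_a \sum_b `|B a b|) * e.
Proof.
move=> hD; rewrite /mxtrace mulr_suml.
apply: (le_trans (ler_norm_sum _ _ _)); apply: ler_sum => a _.
rewrite mxE mulr_suml; apply: (le_trans (ler_norm_sum _ _ _)); apply: ler_sum => b _.
by rewrite normrM ler_wpM2l // ltW.
Qed.

Lemma eig_le1 N (M A : 'M[C]_N) x : root (char_poly M) x ->
  (forall N0, exists n, (N0 <= n)%N /\ forall a b, `|(M ^+ n) a b - A a b| < 1) ->
  `|x| <= 1.
Proof.
move=> rx hl.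
have /eigenvalueP [v vM vn0] : eigenvalue M x by rewrite eigenvalue_root_char.
have vMn n : v *m M ^+ n = x ^+ n *: v.
  elim: n => [|n IH]; first by rewrite !expr0 scale1r mulmx1.
  by rewrite exprSr -mulmxE mulmxA IH -scalemxAl vM scalerA exprSr.
have [k vk] : exists k, v 0 k != 0.
  apply: NNPP => h; move/eqP: vn0; apply; apply/rowP => k.
  rewrite mxE; apply/eqP; apply: NNPP => hk; apply: h; exists k; exact/negP.
have nv : 0 < `|v 0 k| by rewrite normr_gt0.
set B := \sum_b `|v 0 b| * (`|A b k| + 1).
have B0 : 0 <= B by rewrite sumr_ge0 // => b _; rewrite mulr_ge0 // addr_ge0.
rewrite real_leNgt ?ger0_real //; apply/negP => x1.
have [N0 HN] := pow_unbounded x1 (divr_ge0 B0 (ltW nv)).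
have [n [hn hA]] := hl N0.
have := HN n hn; rewrite ltr_pdivrMr // => H.
have H2 : `|x ^+ n * v 0 k| <= B.
  have -> : x ^+ n * v 0 k = (v *m M ^+ n) 0 k by rewrite vMn mxE.
  rewrite mxE; apply: (le_trans (ler_norm_sum _ _ _)); apply: ler_sum => b _.
  rewrite normrM ler_wpM2l //.
  have -> : (M ^+ n) b k = ((M ^+ n) b k - A b k) + A b k by rewrite subrK.
  by apply: (le_trans (ler_normD _ _)); rewrite addrC lerD2l ltW.
move: H2; rewrite normrM normrX => H2; have := lt_le_trans H H2; by rewrite ltxx.
Qed.

End S6.

Theorem mainTheorem15 (C : archiClosedFieldType) (Ccomplete : complete_field C)
  (d : nat) (phi : 'M[C]_d -> 'M[C]_d) (Hphi : quantum_channel phi)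
  (s : seq C) (Hs : char_poly (lin_mx phi) = \prod_(x <- s) ('X - x%:P))
  (Hper : (d < count (fun x : C => (`|x| == 1)%R) s)%N) :
  asymptotically_entanglement_saving phi.
Proof.
move=> L [Ll Lim] EB.
have pl : is_linear_map phi by case: Hphi.
set M := lin_mx phi; set A := lin_mx L.
have sz : size s = (d * d)%N.
  by have := size_char_poly (lin_mx phi); rewrite Hs size_prod_XsubC; case.
have d0 : (0 < d)%N.
  rewrite lt0n; apply/negP => /eqP dd.
  have := leq_trans Hper (count_size _ s); rewrite sz dd.
  by [].
have hLim e : 0 < e -> forall N0, exists n, (N0 <= n)%N /\
    forall a b, `|(M ^+ n) a b - A a b| < e.
  move=> e0 N0; have [n [hn h]] := Lim e e0 N0; exists n; split => // a b.
  by rewrite /M -lin_mx_iter.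
have hle1 x : x \in s -> `|x| <= 1.
  move=> xs; apply: (eig_le1 (M := M) (A := A)); first by rewrite /M Hs root_prod_XsubC.
  by move=> N0; apply: hLim; rewrite ltr01.
have trP := eig_powsum Hs.
pose P := fun x : C => `|x| == 1.
pose Lam := [seq x <- s | P x]; pose Rm := [seq x <- s | ~~ P x].
pose m := size Lam.
have hm : (d < m)%N by rewrite /m size_filter.
pose lam (j : 'I_m) := nth 0 Lam j.
have hlam j : `|lam j| = 1.
  have : lam j \in Lam by rewrite mem_nth.
  by rewrite mem_filter => /andP [/eqP].
have hRm x : x \in Rm -> `|x| < 1.
  by rewrite mem_filter => /andP [nP xs]; rewrite lt_neqAle nP hle1.
have hsplit n : \tr (M ^+ n) = \sum_j lam j ^+ n + \sum_(x <- Rm) x ^+ n.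
  have -> : \sum_j lam j ^+ n = \sum_(x <- Lam) x ^+ n.
    by rewrite [RHS](big_nth 0) big_mkord.
  by rewrite trP /Lam /Rm !big_filter [LHS](bigID P).
pose eps : C := (4 * m.+1)%:R^-1.
have eps0 : 0 < eps by rewrite invr_gt0 ltr0n muln_gt0.
pose T := (8 * m.+1)%N.
have T0 : (0 < T)%N by rewrite muln_gt0.
have hT : 2 * T%:R^-1 = eps.
  rewrite /eps /T (_ : (8 * m.+1 = 2 * (4 * m.+1))%N); last by rewrite mulnA.
  rewrite natrM invfM mulrA mulfV ?mul1r // pnatr_eq0.
  by [].
pose g n : {ffun 'I_m -> 'I_(2 * T).+1 * 'I_(2 * T).+1} :=
  [ffun j => cellc T (lam j ^+ n)].
pose G j n := forall a b, `|(M ^+ n) a b - A a b| < (j.+1)%:R^-1.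
have mono : forall j j' n, (j <= j')%N -> G j' n -> G j n.
  move=> j j' n jj h a b; apply: (lt_le_trans (h a b)).
  by rewrite lef_pV2 ?posrE ?ltr0n // ler_nat.
have freq : forall j N0, exists n, (N0 <= n)%N /\ G j n.
  by move=> j N0; apply: hLim; rewrite invr_gt0 ltr0n.
have [c Hc] := box g mono freq.
have [n0 [_ [_ gn0]]] := Hc 0%N 0%N.
have [K [hK hKl]] := dirichlet (T := T) (N0 := n0.+1) T0 (ltn0Sn _) hlam.
rewrite hT in hKl.
pose k := (K - n0)%N.
have hf : `|\tr (M ^+ k *m A)| <= d%:R.
  have := EB_trace_bound d0 Ll EB (iter_channel k Hphi).
  have -> : (fun X => L (iter k phi X)) = L \o iter k phi by [].
  by rewrite (lin_mx_comp _ Ll) lin_mx_iter.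
pose S := \sum_a \sum_b `|(M ^+ k) a b| + 1.
have S0 : 0 < S by rewrite ltr_wpDl // sumr_ge0 // => a _; rewrite sumr_ge0.
pose j := Num.bound (S / eps).
have hj : S * (j.+1)%:R^-1 < eps.
  have := archi_boundP (divr_ge0 (ltW S0) (ltW eps0)) => hb.
  rewrite ltr_pdivrMr ?ltr0n // mulrC -ltr_pdivrMr //.
  by apply: (lt_trans hb); rewrite ltr_nat.
have [Nd HNd] := decay_seq hRm eps0.
have [n [hn [Gn gn]]] := Hc j Nd.
have hpert : `|\tr (M ^+ k *m (M ^+ n - A))| < eps.
  apply: (le_lt_trans (tr_pert (e := (j.+1)%:R^-1) _ _)).
    by move=> a b; have := Gn a b; rewrite -/A; rewrite (_ : (M ^+ n - A) a b = (M ^+ n) a b - A a b) // !mxE.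
  apply: le_lt_trans hj; rewrite ler_wpM2r ?invr_ge0 ?ler0n //.
  by rewrite lerDl.
have tr_eq : \tr (M ^+ (n + k)) = \tr (M ^+ k *m A) + \tr (M ^+ k *m (M ^+ n - A)).
  rewrite mulmxBr raddfB /= addrC subrK exprD -mulmxE mxtrace_mulC //.
have lamclose jj : `|lam jj ^+ (n + k) - 1| < eps + eps.
  apply: shift_close (hlam jj) (ltnW hK) _ (hKl jj).
  have e := congr1 (fun f : {ffun _ -> _} => f jj) (etrans gn (esym gn0)).
  move: e; rewrite /g !ffunE => e.
  have n1 t : `|lam jj ^+ t| <= 1 by rewrite pow_norm1.
  by rewrite -hT; apply: cellc_close.
set Sl := \sum_jj lam jj ^+ (n + k).
set Sr := \sum_(x <- Rm) x ^+ (n + k).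
have hSr : `|Sr| < eps by apply: HNd; rewrite (leq_trans hn) ?leq_addr.
have htr : `|\tr (M ^+ (n + k))| <= d%:R + eps.
  rewrite tr_eq; apply: (le_trans (ler_normD _ _)).
  by apply: lerD => //; exact: ltW.
have hSl : `|Sl| <= d%:R + eps + eps.
  have -> : Sl = \tr (M ^+ (n + k)) - Sr by rewrite hsplit addrK.
  apply: (le_trans (ler_normB _ _)); apply: lerD => //; exact: ltW.
have hmS : `|m%:R - Sl| <= m%:R * (eps + eps).
  have -> : m%:R - Sl = \sum_jj (1 - lam jj ^+ (n + k)).
    by rewrite sumrB sumr_const card_ord.
  apply: (le_trans (ler_norm_sum _ _ _)).
  apply: (le_trans (y := \sum_(jj < m) (eps + eps))).
    by apply: ler_sum => jj _; rewrite distrC ltW.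
  by rewrite sumr_const card_ord mulr_natl.
have hmm : m%:R <= d%:R + eps + eps + m%:R * (eps + eps).
  apply: (le_trans (y := `|Sl| + `|m%:R - Sl|)); last exact: lerD.
  by have := ler_normD Sl (m%:R - Sl); rewrite addrC subrK normr_nat.
have half : eps + eps + m%:R * (eps + eps) = 2^-1.
  rewrite /eps; field.
  by rewrite addrC natr1 pnatr_eq0.
have hd : (d.+1)%:R <= m%:R :> C by rewrite ler_nat.
have := le_trans hd hmm.
rewrite -natr1 -!addrA [eps + (eps + _)]addrA half lerD2l.
have : (2 : C)^-1 < 1 by rewrite invf_lt1 ?ltr1n // ltr0n.
by move=> h1 h2; have := lt_le_trans h1 h2; rewrite ltxx.
Qed.
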